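(* For every instance of a rule of $\mathsf{G4iSLt}$ with conclusion $S_0$ and premises $S_1,\dots,S_n$, we have $\Theta(S_i)\prec\Theta(S_0)$ for every $1\le i\le n$, where $\prec$ is the shortlex order.
   Context: Formulas are built by the grammar $\varphi ::= p \mid \bot \mid \varphi\land\varphi \mid \varphi\lor\varphi \mid \varphi\to\varphi \mid \Box\varphi$, with $p$ ranging over a countably infinite set of propositional variables. For a multiset $\Gamma$, $\Box\Gamma=\{\Box\psi:\psi\in\Gamma\}$; a boxed formula is one of the form $\Box\psi$. Weight: $w(\bot)=w(p)=1$; $w(\psi\lor\chi)=w(\psi\to\chi)=w(\psi)+w(\chi)+1$; $w(\psi\land\chi)=w(\psi)+w(\chi)+2$; $w(\Box\psi)=w(\psi)+1$. For a finite multiset $\Delta$ of formulas whose maximal weight is $n$, let $L(\Delta)$ be the list $[c_n,c_{n-1},\dots,c_1]$ of natural numbers of length $n$ where $c_m$ is the number of occurrences in $\Delta$ of formulas of weight $m$ (so the leftmost entry counts formulas of maximal weight; $L$ of the empty multiset is the empty list). For a sequent $\Gamma\Rightarrow\chi$, write $\Gamma=\Gamma_0,\Box\Gamma_1$ where $\Gamma_0$ contains no boxed formula, and set $\Theta(\Gamma\Rightarrow\chi)=L(\Gamma_0\uplus\Gamma_1\uplus\{\chi\})$ (the antecedent's outermost boxes are removed). The shortlex order on lists of natural numbers: $l_0\prec l_1$ iff either $\mathrm{length}(l_0)<\mathrm{length}(l_1)$, or the lengths are equal and $l_0$ is lexicographically smaller than $l_1$ (i.e. at the first position $j$ where they differ,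 the entry of $l_0$ is smaller). A sequent is $\Gamma\Rightarrow\chi$ with $\Gamma$ a finite multiset of formulas and $\chi$ a formula. The sequent calculus $\mathsf{G4iSLt}$ has the following rules, where $p$ is a propositional variable and $\Phi$ always denotes a multiset containing no boxed formula: (⊥L) $\bot,\Gamma\Rightarrow\chi$ (no premise); (IdP) $\Gamma,p\Rightarrow p$ (no premise); (∧L) from $\Gamma,\varphi,\psi\Rightarrow\chi$ infer $\Gamma,\varphi\land\psi\Rightarrow\chi$; (∧R) from $\Gamma\Rightarrow\varphi$ and $\Gamma\Rightarrow\psi$ infer $\Gamma\Rightarrow\varphi\land\psi$; (∨L) from $\Gamma,\varphi\Rightarrow\chi$ and $\Gamma,\psi\Rightarrow\chi$ infer $\Gamma,\varphi\lor\psi\Rightarrow\chi$; (∨R$_i$), $i\in\{1,2\}$: from $\Gamma\Rightarrow\varphi_i$ infer $\Gamma\Rightarrow\varphi_1\lor\varphi_2$; (p→L) from $\Gamma,p,\varphi\Rightarrow\chi$ infer $\Gamma,p,p\to\varphi\Rightarrow\chi$; (→R) from $\Gamma,\varphi\Rightarrow\psi$ infer $\Gamma\Rightarrow\varphi\to\psi$; (□→L) from $\Phi,\Gamma,\psi,\Box\varphi\Rightarrow\varphi$ and $\Phi,\Box\Gamma,\psi\Rightarrow\chi$ infer $\Phi,\Box\Gamma,\Box\varphi\to\psi\Rightarrow\chi$; (SLtR) from $\Phi,\Gamma,\Box\varphi\Rightarrow\varphi$ infer $\Phi,\Box\Gamma\Rightarrow\Box\varphi$; (∧→L) from $\Gamma,\varphi\to(\psi\to\chi)\Rightarrow\delta$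 infer $\Gamma,(\varphi\land\psi)\to\chi\Rightarrow\delta$; (∨→L) from $\Gamma,\varphi\to\chi,\psi\to\chi\Rightarrow\delta$ infer $\Gamma,(\varphi\lor\psi)\to\chi\Rightarrow\delta$; (→→L) from $\Gamma,\psi\to\chi\Rightarrow\varphi\to\psi$ and $\Gamma,\chi\Rightarrow\delta$ infer $\Gamma,(\varphi\to\psi)\to\chi\Rightarrow\delta$. *)

(* Defs.v *)
From Stdlib Require Import List Arith Permutation.
Import ListNotations.

Inductive form : Type :=
| Var : nat -> form
| Bot : form
| And : form -> form -> form
| Or : form -> form -> form
| Imp : form -> form -> form
| Box : form -> form.

Fixpoint weight (f : form) : nat :=
  match f with
  | Var _ | Bot => 1
  | Or a b | Imp a b => weight a + weight b + 1
  | And a b => weight a + weight b + 2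
  | Box a => weight a + 1
  end.

Definition is_boxed (f : form) : bool :=
  match f with Box _ => true | _ => false end.

(* multisets are represented by lists; all notions below are invariant
   under permutation, and rule instances are closed under permutation. *)
Definition no_boxed (Phi : list form) : Prop :=
  forall f, In f Phi -> is_boxed f = false.

Definition max_weight (D : list form) : nat :=
  fold_right (fun f m => Nat.max (weight f) m) 0 D.

Definition count_weight (m : nat) (D : list form) : nat :=
  length (filter (fun f => Nat.eqb (weight f) m) D).

Definition L (D : list form) : list nat :=
  map (fun m => count_weight m D) (rev (seq 1 (max_weight D))).

Definition sequent : Type := (list form * form)%type.

(* Gamma = Gamma0, Box Gamma1 with Gamma0 box-free *)
Definition Gamma0 (G : list form) : list form :=
  filter (fun f => negb (is_boxed f)) G.
Definition Gamma1 (G : list form) : list form :=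
  flat_map (fun f => match f with Box a => [a] | _ => [] end) G.

Definition Theta (s : sequent) : list nat :=
  L (Gamma0 (fst s) ++ Gamma1 (fst s) ++ [snd s]).

Fixpoint lex_lt (l0 l1 : list nat) : Prop :=
  match l0, l1 with
  | x :: r0, y :: r1 => x < y \/ (x = y /\ lex_lt r0 r1)
  | _, _ => False
  end.

Definition shortlex_lt (l0 l1 : list nat) : Prop :=
  length l0 < length l1 \/ (length l0 = length l1 /\ lex_lt l0 l1).

Inductive rule_inst : list sequent -> sequent -> Prop :=
| R_BotL G c : rule_inst [] (Bot :: G, c)
| R_IdP G p : rule_inst [] (G ++ [Var p], Var p)
| R_AndL G a b c : rule_inst [(G ++ [a; b], c)] (G ++ [And a b], c)
| R_AndR G a b : rule_inst [(G, a); (G, b)] (G, And a b)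
| R_OrL G a b c : rule_inst [(G ++ [a], c); (G ++ [b], c)] (G ++ [Or a b], c)
| R_OrR1 G a b : rule_inst [(G, a)] (G, Or a b)
| R_OrR2 G a b : rule_inst [(G, b)] (G, Or a b)
| R_pImpL G p a c :
    rule_inst [(G ++ [Var p; a], c)] (G ++ [Var p; Imp (Var p) a], c)
| R_ImpR G a b : rule_inst [(G ++ [a], b)] (G, Imp a b)
| R_BoxImpL Phi G a b c : no_boxed Phi ->
    rule_inst [(Phi ++ G ++ [b; Box a], a); (Phi ++ map Box G ++ [b], c)]
              (Phi ++ map Box G ++ [Imp (Box a) b], c)
| R_SLtR Phi G a : no_boxed Phi ->
    rule_inst [(Phi ++ G ++ [Box a], a)] (Phi ++ map Box G, Box a)
| R_AndImpL G a b c d :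
    rule_inst [(G ++ [Imp a (Imp b c)], d)] (G ++ [Imp (And a b) c], d)
| R_OrImpL G a b c d :
    rule_inst [(G ++ [Imp a c; Imp b c], d)] (G ++ [Imp (Or a b) c], d)
| R_ImpImpL G a b c d :
    rule_inst [(G ++ [Imp b c], Imp a b); (G ++ [c], d)]
              (G ++ [Imp (Imp a b) c], d).

Definition seq_equiv (s t : sequent) : Prop :=
  Permutation (fst s) (fst t) /\ snd s = snd t.

Definition G4iSLt_rule (ps : list sequent) (c : sequent) : Prop :=
  exists ps' c', rule_inst ps' c' /\ Forall2 seq_equiv ps ps' /\ seq_equiv c c'.

(* Main.v *)
Require Import Defs.
From Stdlib Require Import List Arith Lia Permutation.
Import ListNotations.

Definition ind (m k : nat) : nat := if m <=? k then 1 else 0.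
Definition th (m : nat) (f : form) : nat :=
  match f with Box a => ind m (weight a) | _ => ind m (weight f) end.
Fixpoint Ssum (m : nat) (G : list form) : nat :=
  match G with [] => 0 | f :: G' => th m f + Ssum m G' end.
Definition gc (m : nat) (D : list form) : nat :=
  length (filter (fun f => m <=? weight f) D).
Definition SS (m : nat) (s : sequent) : nat := Ssum m (fst s) + ind m (weight (snd s)).

Lemma weight_pos f : 1 <= weight f.
Proof. destruct f; simpl; lia. Qed.

Lemma gc_app m A B : gc m (A ++ B) = gc m A + gc m B.
Proof. unfold gc. rewrite filter_app, length_app. reflexivity. Qed.

Lemma gc_split m G : gc m (Gamma0 G) + gc m (Gamma1 G) = Ssum m G.
Proof.
  induction G as [|f G IH]; [reflexivity|].
  unfold Gamma0, Gamma1 in *. destruct f; simpl; unfold gc, ind in *; simpl;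
  repeat match goal with |- context [?a <=? ?b] => destruct (Nat.leb_spec a b) end;
  simpl; lia.
Qed.

Lemma GC_eq m s : gc m (Gamma0 (fst s) ++ Gamma1 (fst s) ++ [snd s]) = SS m s.
Proof.
  unfold SS. rewrite !gc_app, <- gc_split.
  unfold gc at 3, ind; simpl. destruct (m <=? weight (snd s)); simpl; lia.
Qed.

Lemma Ssum_app m A B : Ssum m (A ++ B) = Ssum m A + Ssum m B.
Proof. induction A; simpl; lia. Qed.

Lemma Ssum_perm m A B : Permutation A B -> Ssum m A = Ssum m B.
Proof. induction 1; simpl; lia. Qed.

Lemma th_le m f : th m f <= ind m (weight f).
Proof.
  destruct f; simpl; auto. unfold ind.
  destruct (Nat.leb_spec m (weight f)), (Nat.leb_spec m (weight f + 1)); lia.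
Qed.

Lemma Ssum_box m G : Ssum m G <= Ssum m (map Box G).
Proof. induction G; simpl; auto. pose proof (th_le m a). lia. Qed.

Lemma gc_count m D : gc m D = count_weight m D + gc (S m) D.
Proof.
  unfold gc, count_weight. induction D as [|f D IH]; cbn [filter length]; auto.
  destruct (Nat.leb_spec m (weight f)), (Nat.eqb_spec (weight f) m),
    (Nat.leb_spec (S m) (weight f)); cbn [length]; lia.
Qed.

Lemma gc_zero m D : max_weight D < m -> gc m D = 0.
Proof.
  unfold gc. induction D as [|f D IH]; simpl; auto. intros H.
  destruct (Nat.leb_spec m (weight f)); [lia|]. apply IH. lia.
Qed.

Lemma gc_pos m D : 1 <= m -> m <= max_weight D -> 0 < gc m D.
Proof.
  unfold gc. induction D as [|f D IH]; simpl; [lia|]. intros H1 H2.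
  destruct (Nat.leb_spec m (weight f)); simpl; [lia|]. apply IH; lia.
Qed.

Lemma lex_step D1 D0 k : 1 <= k ->
  (forall m, k <= m -> gc m D1 <= gc m D0) -> gc k D1 < gc k D0 ->
  forall j, k <= j -> gc (S j) D1 = gc (S j) D0 ->
  lex_lt (map (fun m => count_weight m D1) (rev (seq 1 j)))
         (map (fun m => count_weight m D0) (rev (seq 1 j))).
Proof.
  intros Hk Hle Hlt j. induction j as [|j IH]; intros Hj Heq; [lia|].
  rewrite seq_S, rev_app_distr. simpl.
  pose proof (gc_count (S j) D1). pose proof (gc_count (S j) D0).
  pose proof (Hle (S j) Hj).
  destruct (Nat.lt_ge_cases (gc (S j) D1) (gc (S j) D0)).
  - left. lia.
  - right. split; [lia|]. apply IH.
    + destruct (Nat.eq_dec k (S j)); [subst; lia | lia].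
    + lia.
Qed.

Lemma crit D1 D0 k : 1 <= k ->
  (forall m, k <= m -> gc m D1 <= gc m D0) -> gc k D1 < gc k D0 ->
  shortlex_lt (L D1) (L D0).
Proof.
  intros Hk Hle Hlt. unfold shortlex_lt, L. rewrite !length_map, !length_rev, !length_seq.
  assert (Hk0 : k <= max_weight D0).
  { destruct (Nat.le_gt_cases k (max_weight D0)); auto. rewrite (gc_zero k D0) in Hlt; lia. }
  assert (H10 : max_weight D1 <= max_weight D0).
  { destruct (Nat.le_gt_cases (max_weight D1) (max_weight D0)); auto.
    pose proof (gc_pos (max_weight D1) D1).
    pose proof (gc_zero (max_weight D1) D0 H).
    destruct (Nat.le_gt_cases k (max_weight D1)).
    - pose proof (Hle _ H2). lia.
    - lia. }
  destruct (Nat.eq_dec (max_weight D1) (max_weight D0)) as [E|E]; [|left; lia].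
  right. split; [exact E|]. rewrite E.
  apply (lex_step D1 D0 k); auto.
  rewrite !gc_zero; lia.
Qed.

Ltac crunch :=
  repeat match goal with |- context [th ?m ?f] =>
    generalize (th_le m f); generalize (th m f); intro end;
  unfold ind; simpl weight in *;
  repeat match goal with |- context [?a <=? ?b] => destruct (Nat.leb_spec a b) end;
  intros; lia.

Ltac solve_k k :=
  exists k; split; [pose proof (weight_pos (Var 0)); simpl; lia|];
  split; [intros m Hm | ]; unfold SS; cbn [fst snd]; rewrite ?Ssum_app;
  try (let m := match goal with |- context [Ssum ?m _] => m end in
       match goal with |- context [Ssum _ (map Box ?G)] => pose proof (Ssum_box m G) end);
  simpl Ssum; crunch.

Lemma rule_SS ps c : rule_inst ps c -> forall s, In s ps ->
  exists k, 1 <= k /\ (forall m, k <= m -> SS m s <= SS m c) /\ SS k s < SS k c.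
Proof.
  intros H; destruct H; intros s Hs; simpl in Hs;
  repeat destruct Hs as [Hs|Hs]; try contradiction; subst s;
  first [ solve_k (weight (And a b)) | solve_k (weight (Or a b))
        | solve_k (weight (Imp (Var p) a)) | solve_k (weight (Imp (Box a) b))
        | solve_k (weight (Imp a b)) | solve_k (weight (Box a))
        | solve_k (weight (Imp (And a b) c)) | solve_k (weight (Imp (Or a b) c))
        | solve_k (weight (Imp (Imp a b) c)) ].
Qed.

Lemma Forall2_In {A B} (R : A -> B -> Prop) l1 l2 x :
  Forall2 R l1 l2 -> In x l1 -> exists y, In y l2 /\ R x y.
Proof.
  induction 1; simpl; [tauto|]. intros [->|Hi].
  - exists y; auto.
  - destruct (IHForall2 Hi) as [z [? ?]]. exists z; auto.
Qed.

Lemma SS_equiv m s t : seq_equiv s t -> SS m s = SS m t.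
Proof.
  intros [Hp He]. unfold SS. rewrite He, (Ssum_perm m _ _ Hp). reflexivity.
Qed.

Theorem lemma3 : forall (ps : list sequent) (c : sequent),
  G4iSLt_rule ps c -> forall s, In s ps -> shortlex_lt (Theta s) (Theta c).
Proof.
  intros ps c [ps' [c' [Hr [HF Hc]]]] s Hs.
  destruct (Forall2_In _ _ _ _ HF Hs) as [s' [Hs' Hss']].
  destruct (rule_SS _ _ Hr s' Hs') as [k [Hk [Hle Hlt]]].
  unfold Theta. apply (crit _ _ k Hk).
  - intros m Hm. rewrite !GC_eq, (SS_equiv m _ _ Hss'), (SS_equiv m _ _ Hc). auto.
  - rewrite !GC_eq, (SS_equiv k _ _ Hss'), (SS_equiv k _ _ Hc). auto.
Qed.
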